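(* Let $A$ be an $n\times m$ binary matrix with $R_{binary}(A)=n$. Then $A$ has the Augmentation property for the binary rank.
   Context: $R_{binary}(A)$ is the least $k$ such that $A=UV$ with $U\in\{0,1\}^{n\times k}$, $V\in\{0,1\}^{k\times m}$, ordinary arithmetic. $A$ has the Augmentation property for the binary rank if for every collection of binary column vectors $x_1,\dots,x_t$ of length $n$ with $R_{binary}(A|x_i)=R_{binary}(A)$ for all $i$, also $R_{binary}(A|x_1,\dots,x_t)=R_{binary}(A)$, where $(A|x_1,\dots,x_t)$ is $A$ with these columns appended. *)

(* Defs.v *)
From mathcomp Require Import all_boot all_order all_algebra.
Set Implicit Arguments. Unset Strict Implicit. Unset Printing Implicit Defensive.
Local Open Scope ring_scope.

(* Binary matrices: matrices of natural numbers with all entries in {0,1};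
   products are ordinary (nat) matrix products, no modular arithmetic. *)
Definition binary_mx (p q : nat) (M : 'M[nat]_(p, q)) : Prop :=
  forall i j, (M i j <= 1)%N.

Definition binary_factorizable (n m k : nat) (A : 'M[nat]_(n, m)) : Prop :=
  exists (U : 'M[nat]_(n, k)) (V : 'M[nat]_(k, m)),
    binary_mx U /\ binary_mx V /\ A = U *m V.

Definition binary_rank_is (n m : nat) (A : 'M[nat]_(n, m)) (r : nat) : Prop :=
  binary_factorizable r A /\ forall k, binary_factorizable k A -> (r <= k)%N.

(* (A | x_1, ..., x_t) : the columns x_i are the columns of X : 'M_(n, t),
   appended to A via row_mx. The i-th appended column alone is col i X. *)
Definition augmentation_property (n m : nat) (A : 'M[nat]_(n, m)) : Prop :=
  forall (r t : nat) (X : 'M[nat]_(n, t)),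
    binary_rank_is A r ->
    binary_mx X ->
    (forall i : 'I_t, binary_rank_is (row_mx A (col i X)) r) ->
    binary_rank_is (row_mx A X) r.

(* Main.v *)
Require Import Defs.
From mathcomp Require Import all_boot all_order all_algebra.

Lemma bin_lsub k p q (V : 'M[nat]_(k, p + q)) : binary_mx V -> binary_mx (lsubmx V).
Proof. by move=> h i j; rewrite (@mxE nat). Qed.

Theorem mainTheorem10 (n m : nat) (A : 'M[nat]_(n, m)) :
  binary_mx A -> binary_rank_is A n -> augmentation_property A.
Proof.
move=> binA [fA minA] r t X [fr minr] binX _.
have -> : r = n by apply/eqP; rewrite eqn_leq (minr n fA) (minA r fr).
split.
  exists (1%:M)%R, (row_mx A X); split; last split.
  - by move=> i j; rewrite (@mxE nat); case: (i == j).
  - by move=> i j; rewrite -[j](splitK); case: (split j) => k /=; [rewrite row_mxEl | rewrite row_mxEr].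
  - by rewrite mul1mx.
move=> k [U [V [bU [bV e]]]]; apply: minA.
exists U, (lsubmx V); split => //; split; first exact: bin_lsub.
by rewrite mulmx_lsub -e row_mxKl.
Qed.
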